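(* Let $H_{KR}=[h_1\cdots h_{51}]=[I_{10}\ M_{KR}]$ be the $10\times 51$ binary matrix, where $I_{10}$ is the identity matrix (so $h_i$ is the $i$-th unit vector for $i\le10$) and $h_{11},\dots,h_{51}$ are, in order, the columns of $M_{KR}$ given in hexadecimal as 1B6, 193, 1CC, 187, 1F6, F7, 16E, 140, 3C, 296, 22F, 303, 381, 365, 11D, 1A3, 274, 2F2, 254, 56, F, 41, 357, 208, 34, 329, 28D, 31D, 3D5, 129, 3D7, B7, 3EC, 2E2, 23C, AD, 34E, 155, 2E6, 371, D4 (each hexadecimal number written as a 10-bit binary string, most significant bit as the top entry; e.g. 1B6 $=(0,1,1,0,1,1,0,1,1,0)^T$). Let $\mathcal P_{KR}$ be the partition of the column indices into the 11 subsets $\{5,13,43\}$, $\{20,27\}$, $\{3,29,33,39,41,48,51\}$, $\{1,7,19,25,34,45\}$, $\{2,4,18\}$, $\{6,8,12,26,28,35,44\}$, $\{9,22,23,30\}$, $\{10,11,15,16,32,42\}$, $\{14,24,49,50\}$, $\{17,21,31,37,46,47\}$, $\{36,38,40\}$. Then (i) $\mathcal P_{KR}$ is a $2$-partition of $H_{KR}$: every nonzero vector of $\mathbb{F}_2^{10}$ is a column of $H_{KR}$ or the sum of two columns of $H_{KR}$ lying in distinct subsets of $\mathcal P_{KR}$; (ii) the code with parity-check matrix $H_{KR}$ has minimum distance $3$, and $h_5+h_{27}+h_{29}=0$, where $h_5,h_{27},h_{29}$ lie in three distinct subsets of $\mathcal P_{KR}$.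
   Context: For an $r\times n$ parity-check matrix $H$ of a binary code of covering radius $2$ and minimum distance $\ge3$, a $2$-partition is a partition of the column set of $H$ into nonempty subsets such that every vector of $\mathbb{F}_2^r$ is the sum of at most $2$ columns of $H$ lying in pairwise distinct subsets (the zero vector being the empty sum). *)

(* Defs.v *)
From HB Require Import structures.
From mathcomp Require Import all_boot all_order all_algebra.
Set Implicit Arguments. Unset Strict Implicit. Unset Printing Implicit Defensive.
Import GRing.Theory.
Local Open Scope ring_scope.

(* Columns of H_KR indexed 1..51 (paper's 1-based convention). *)

Definition MKR_hex : seq nat :=
  [:: 0x1B6; 0x193; 0x1CC; 0x187; 0x1F6; 0xF7; 0x16E; 0x140; 0x3C; 0x296;
      0x22F; 0x303; 0x381; 0x365; 0x11D; 0x1A3; 0x274; 0x2F2; 0x254; 0x56;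
      0xF; 0x41; 0x357; 0x208; 0x34; 0x329; 0x28D; 0x31D; 0x3D5; 0x129;
      0x3D7; 0xB7; 0x3EC; 0x2E2; 0x23C; 0xAD; 0x34E; 0x155; 0x2E6; 0x371; 0xD4]%N.

Definition hexcol (n : nat) : 'cV['F_2]_10 :=
  \col_(i < 10) (((n %/ 2 ^ (9 - i)) %% 2)%N)%:R.

Definition unitcol (k : nat) : 'cV['F_2]_10 :=
  \col_(i < 10) (i.+1 == k)%:R.

Definition hKR (j : nat) : 'cV['F_2]_10 :=
  if (j <= 10)%N then unitcol j else hexcol (nth 0%N MKR_hex (j - 11)).

Definition H_KR : 'M['F_2]_(10, 51) := \matrix_(i < 10, j < 51) hKR j.+1 i ord0.

Definition P_KR : seq (seq nat) :=
  [:: [:: 5; 13; 43];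
      [:: 20; 27];
      [:: 3; 29; 33; 39; 41; 48; 51];
      [:: 1; 7; 19; 25; 34; 45];
      [:: 2; 4; 18];
      [:: 6; 8; 12; 26; 28; 35; 44];
      [:: 9; 22; 23; 30];
      [:: 10; 11; 15; 16; 32; 42];
      [:: 14; 24; 49; 50];
      [:: 17; 21; 31; 37; 46; 47];
      [:: 36; 38; 40]]%N.

Definition is_partition (P : seq (seq nat)) (n : nat) : Prop :=
  perm_eq (flatten P) (iota 1 n) /\ all (fun B => size B != 0%N) P.

Definition distinct_blocks (P : seq (seq nat)) (j k : nat) : bool :=
  ~~ has (fun B => (j \in B) && (k \in B)) P.

Definition colj (r n : nat) (H : 'M['F_2]_(r, n)) (j : nat) : 'cV['F_2]_r :=
  \col_(i < r) (if insub j.-1 is Some jj then H i jj else 0).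

(* 2-partition: every vector of F_2^r is the sum of at most 2 columns of H
   lying in pairwise distinct subsets of P (the zero vector = empty sum). *)
Definition two_partition (r n : nat) (H : 'M['F_2]_(r, n)) (P : seq (seq nat)) : Prop :=
  is_partition P n /\
  forall v : 'cV['F_2]_r,
    v = 0 \/
    (exists j, (1 <= j <= n)%N /\ v = colj H j) \/
    (exists j k, (1 <= j <= n)%N /\ (1 <= k <= n)%N /\ distinct_blocks P j k
                 /\ v = colj H j + colj H k).

Definition codeword (r n : nat) (H : 'M['F_2]_(r, n)) (c : 'rV['F_2]_n) : bool :=
  H *m c^T == 0.

Definition wt (n : nat) (c : 'rV['F_2]_n) : nat := #|[set j : 'I_n | c ord0 j != 0]|.

Definition min_distance (r n : nat) (H : 'M['F_2]_(r, n)) (d : nat) : Prop :=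
  (exists c, codeword H c /\ c != 0 /\ wt c = d) /\
  (forall c, codeword H c -> c != 0 -> (d <= wt c)%N).

(* Main.v *)
Require Import Defs.
From mathcomp Require Import all_boot all_order all_algebra.
Import GRing.Theory.
Local Open Scope ring_scope.

Definition code (j : nat) : nat :=
  if (j <= 10)%N then (2 ^ (10 - j))%N else nth 0%N MKR_hex (j - 11).

Definition bits (n i : nat) : nat := ((n %/ 2 ^ (9 - i)) %% 2)%N.

Definition bitsum_ok (a b c : nat) : bool :=
  all (fun i => ((bits a i + bits b i) %% 2 == bits c i)%N) (iota 0 10).

Lemma prime2 : prime 2. Proof. by []. Qed.

Lemma F2_natmod (x : nat) : (x%:R : 'F_2) = (x %% 2)%N%:R.
Proof. by rewrite (Fp_nat_mod prime2). Qed.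

Lemma hexcol_add a b c : bitsum_ok a b c -> hexcol a + hexcol b = hexcol c.
Proof.
move=> /allP H; apply/matrixP => i k; rewrite !mxE -natrD F2_natmod.
have := H i; rewrite mem_iota /= /bits => /(_ (ltn_ord i))/eqP ->.
by [].
Qed.

Lemma hexcol0 : hexcol 0 = 0.
Proof. by apply/matrixP => i k; rewrite !mxE div0n mod0n. Qed.

Lemma unit_ok : all (fun j => all (fun i =>
   nat_of_bool (i.+1 == j) == bits (2 ^ (10 - j)) i) (iota 0 10)) (iota 1 10).
Proof. by vm_compute. Qed.

Lemma hKR_code j : (1 <= j)%N -> hKR j = hexcol (code j).
Proof.
move=> j1; rewrite /hKR /code; case: ifP => // j10.
apply/matrixP => i k; rewrite !mxE.
have jin : (j \in iota 1 10) by rewrite mem_iota j1 /= ltnS j10.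
have /allP/(_ i) := allP unit_ok j jin.
by rewrite mem_iota /= /bits => /(_ (ltn_ord i))/eqP <-.
Qed.

Lemma colj_code j : (1 <= j <= 51)%N -> colj H_KR j = hexcol (code j).
Proof.
case/andP=> j1 j51; rewrite -hKR_code //; apply/matrixP => i k.
rewrite !mxE; case: insubP => [jj _ ejj|].
  by rewrite mxE (ord1 k) [val jj]ejj prednK.
by move=> /negP []; rewrite -ltnS prednK.
Qed.

Definition key (n : nat) : seq nat := map (bits n) (iota 0 10).

Definition decode (l : seq nat) : nat := foldl (fun acc b => 2 * acc + b)%N 0%N l.

Lemma key_dec : all (fun n => decode (key n) == n) (iota 0 1024).
Proof. Time vm_compute. reflexivity. Time Qed.

Lemma bits_lt2 n i : (bits n i < 2)%N.
Proof. by rewrite /bits ltn_mod. Qed.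

Lemma F2val (x : nat) : nat_of_ord (x%:R : 'F_2) = (x %% 2)%N.
Proof. exact: (val_Fp_nat (isT : prime 2)). Qed.
Lemma F2eq (x y : nat) : (x < 2)%N -> (y < 2)%N -> (x%:R : 'F_2) = y%:R -> x = y.
Proof. move=> xl yl /(congr1 (@nat_of_ord _)). rewrite !F2val !modn_small //. Qed.

Lemma hexcol_key n m : hexcol n = hexcol m -> key n = key m.
Proof.
move=> E; apply/eq_in_map => i; rewrite mem_iota /= => ilt.
have /matrixP/(_ (Ordinal ilt) ord0) := E; rewrite !mxE.
exact: F2eq (bits_lt2 _ _) (bits_lt2 _ _).
Qed.

Lemma uniq_map_inj (T1 T2 : eqType) (f : T1 -> T2) (s : seq T1) :
  uniq (map f s) -> {in s &, injective f}.
Proof.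
elim: s => //= x s IH /andP[nx u] a b; rewrite !inE.
case/orP=> [/eqP->|aS]; case/orP=> [/eqP->|bs] //.
- by move=> e; move: nx; rewrite e (map_f f bs).
- by move=> e; move: nx; rewrite -e (map_f f aS).
- exact: IH.
Qed.

Lemma hexcol_inj n m : (n < 1024)%N -> (m < 1024)%N -> hexcol n = hexcol m -> n = m.
Proof.
move=> nl ml /hexcol_key e.
have := allP key_dec n; have := allP key_dec m; rewrite !mem_iota /= nl ml e.
by move=> /(_ isT)/eqP -> /(_ isT)/eqP.
Qed.

Definition wit : seq (nat * nat) := [:: (0,0); (10,0); (9,0); (9,10); (8,0); (8,10); (8,9); (7,31); (7,0); (7,10); (7,9); (8,31); (7,8); (9,31); (10,31); (31,0); (6,0); (6,10); (6,9); (21,45); (5,35); (11,26); (4,30); (30,32); (6,7); (33,47); (42,46); (20,37); (5,19); (2,25); (22,38); (6,31); (5,0); (5,10); (5,9); (16,51); (5,8); (11,12); (33,50); (21,34); (5,7); (2,40); (22,36); (24,47); (6,19); (3,46); (17,18); (1,21); (5,6); (11,14); (24,33); (19,31); (35,0); (10,35); (9,35); (3,42); (8,19); (39,43); (13,15); (17,48); (19,0); (10,19); (9,19); (47,50); (4,0); (32,0); (4,9); (9,32); (4,8); (8,32); (6,30); (17,40); (4,7); (7,32); (33,38); (13,14); (24,36); (22,47); (31,32); (4,31); (4,6); (6,32); (8,30); (38,47); (1,29); (2,48); (30,0); (10,30); (36,50); (30,31); (16,46); (21,27); (29,34); (18,25); (7,30); (12,13); (4,5); (5,32); (30,35); (42,51);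 (20,28); (12,15); (22,24); (36,47); (29,45); (18,40); (19,30); (37,49); (38,50); (23,43); (2,17); (13,26); (20,49); (14,15); (22,50); (17,25); (1,27); (32,35); (5,30); (3,16); (24,38); (46,51); (11,13); (21,29); (4,19); (19,32); (33,36); (28,37); (3,0); (3,10); (3,9); (35,42); (3,8); (34,37); (27,28); (2,14); (3,7); (24,43); (26,40); (19,42); (13,18); (1,37); (12,25); (3,31); (3,6); (19,46); (27,49); (2,12); (4,51); (32,51); (1,20); (5,42); (15,17); (13,48); (14,25); (39,47); (23,38); (43,50); (20,34); (11,40); (3,5); (16,30); (13,17); (2,26); (39,50); (7,46); (28,29); (6,42); (23,36); (8,46); (20,45); (11,25); (10,46); (46,0); (14,40); (9,46); (24,39); (37,45); (24,41); (8,42); (3,35); (9,42); (2,11); (42,0); (31,42); (20,21); (12,40); (33,43); (3,19); (6,46); (25,26); (7,42); (3,4); (3,32); (20,29); (16,35); (6,51); (36,43); (12,48); (14,18); (38,39); (21,49); (38,41); (16,19); (2,13); (17,26); (28,45); (23,47); (8,51); (13,25); (14,48); (12,18); (51,0); (10,51); (3,30); (5,16); (11,17); (29,37); (45,49); (31,51); (7,51); (21,28); (44,45); (15,40); (35,51); (30,42); (1,44); (11,48); (23,24); (13,40); (1,49); (6,16); (19,51); (14,17); (34,44); (15,25); (32,46); (4,46); (34,49); (22,43); (23,50); (38,43); (1,28); (8,16); (5,51); (9,16); (2,15); (16,0); (16,31); (27,37); (28,34); (30,46); (36,39); (12,17); (36,41); (7,16); (2,0); (2,10); (2,9); (1,22);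 (2,8); (27,50); (21,36); (3,14); (2,7); (5,40); (43,49); (22,34); (23,37); (6,25); (26,46); (2,31); (2,6); (24,27); (25,31); (3,12); (26,42); (4,48); (18,30); (20,23); (13,51); (8,25); (29,47); (11,46); (10,25); (25,0); (28,43); (9,25); (2,5); (7,40); (15,51); (3,26); (12,42); (28,41); (31,40); (28,39); (10,40); (40,0); (14,46); (9,40); (21,22); (8,40); (4,17); (17,32); (14,42); (24,29); (21,38); (39,49); (2,35); (41,44); (3,11); (39,44); (17,30); (6,40); (27,47); (13,16); (2,19); (5,25); (12,46); (22,45); (18,0); (2,32); (9,18); (20,39); (8,18); (6,48); (34,47); (12,51); (7,18); (29,38); (21,24); (25,30); (3,13); (45,50); (1,47); (18,31); (6,18); (8,48); (17,19); (14,51); (10,48); (48,0); (2,30); (1,33); (37,39); (24,45); (17,35); (15,46); (25,32); (4,25); (21,50); (33,34); (5,18); (13,46); (11,51); (23,44); (12,16); (1,24); (7,17); (23,49); (32,40); (4,40); (8,17); (33,45); (9,17); (24,34); (17,0); (10,17); (14,16); (1,50); (45,47); (23,28); (18,35); (5,48); (3,15); (22,27); (21,33); (34,50); (20,43); (13,42); (18,19); (29,36); (6,17); (30,40); (2,3); (1,23); (11,35); (5,26); (40,46); (9,14); (10,14); (14,0); (14,31); (23,34); (11,19); (20,38); (4,13); (13,32); (22,37); (7,14); (37,38); (9,12); (10,12); (12,0); (18,51); (20,22); (5,11); (6,14); (27,43); (16,17); (13,30); (7,12); (12,31); (3,25); (40,42); (19,26); (15,30); (9,26); (10,26); (26,0);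 (36,37); (28,33); (6,11); (5,14); (47,49); (3,40); (25,42); (7,26); (26,31); (2,46); (21,23); (12,19); (25,46); (33,49); (8,11); (5,12); (9,11); (33,44); (11,0); (2,42); (29,43); (11,31); (17,51); (14,19); (28,47); (23,45); (7,11); (20,36); (3,18); (20,33); (15,35); (13,31); (7,13); (12,30); (14,32); (4,14); (8,13); (25,51); (15,19); (36,44); (13,0); (10,13); (9,13); (36,49); (43,45); (14,30); (12,32); (4,12); (2,51); (1,39); (5,15); (1,41); (20,47); (17,42); (33,37); (28,36); (6,13); (34,39); (16,40); (34,41); (11,30); (22,44); (26,32); (4,26); (34,43); (22,49); (6,15); (20,50); (24,37); (39,45); (16,25); (41,45); (1,43); (18,46); (3,17); (28,38); (13,19); (22,28); (8,15); (20,24); (9,15); (23,27); (15,0); (2,16); (13,35); (15,31); (21,39); (38,49); (37,50); (40,51); (7,15); (38,44); (1,0); (1,10); (1,9); (2,22); (1,8); (16,28); (14,23); (31,34); (34,0); (10,34); (9,34); (17,24); (8,34); (3,37); (18,47); (1,31); (1,6); (16,49); (12,23); (19,21); (4,29); (16,44); (3,20); (18,33); (6,34); (13,39); (15,43); (13,41); (5,45); (2,38); (22,25); (17,50); (1,5); (15,41); (23,26); (15,39); (48,50); (18,24); (28,51); (7,21); (5,34); (2,36); (22,40); (8,21); (6,45); (9,21); (10,21); (21,0); (24,48); (18,50); (49,51); (31,45); (1,35); (27,32); (44,51); (11,23); (8,45); (17,33); (37,42); (20,46); (45,0); (10,45); (9,45); (6,21); (1,4); (1,32); (20,51); (18,22);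 (6,29); (28,42); (12,39); (17,36); (4,34); (32,34); (25,33); (46,49); (24,40); (13,23); (2,47); (26,43); (8,29); (42,49); (14,39); (25,47); (29,0); (10,29); (1,30); (2,33); (40,50); (37,51); (11,43); (29,31); (7,29); (18,38); (30,34); (28,46); (29,35); (11,41); (3,44); (11,39); (6,27); (2,24); (3,49); (40,47); (19,29); (18,36); (30,45); (14,43); (25,50); (17,22); (21,32); (4,21); (8,27); (2,50); (3,28); (17,38); (27,0); (10,27); (9,27); (15,23); (24,25); (21,30); (16,37); (27,31); (4,45); (32,45); (33,40); (12,43); (1,3); (2,23); (13,47); (16,27); (14,22); (7,37); (6,20); (15,50); (3,34); (8,37); (26,36); (42,45); (10,37); (37,0); (12,38); (9,37); (12,22); (45,46); (8,20); (15,24); (9,20); (18,39); (20,0); (10,20); (21,42); (20,31); (14,38); (13,33); (23,25); (6,37); (7,20); (11,36); (22,26); (15,33); (4,44); (16,29); (28,30); (34,46); (4,49); (32,49); (23,40); (13,24); (19,20); (11,38); (18,43); (1,46); (14,36); (3,21); (30,49); (19,37); (4,28); (28,32); (30,44); (11,22); (5,20); (1,42); (15,47); (17,41); (12,36); (17,39); (3,45); (13,50); (26,38); (34,42); (20,30); (18,23); (5,44); (27,42); (12,33); (40,43); (5,49); (11,50); (25,39); (14,47); (25,41); (16,45); (32,37); (4,37); (19,28); (13,22); (14,33); (13,38); (5,28); (11,24); (1,51); (2,39); (4,20); (2,41); (16,21); (27,46); (19,49); (30,37); (34,51); (12,47); (19,44); (15,36); (9,44); (11,33); (44,0); (10,44);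 (9,49); (13,36); (49,0); (10,49); (45,51); (31,49); (7,44); (15,38); (2,43); (26,47); (7,49); (17,23); (9,28); (25,43); (28,0); (10,28); (3,27); (15,22); (6,49); (1,16); (11,47); (29,46); (7,28); (21,51); (39,40); (28,31); (40,41); (16,34); (1,2); (3,23); (10,22); (22,0); (15,28); (12,20); (21,40); (8,22); (2,34); (5,36); (14,37); (7,22); (22,31); (6,38); (4,47); (32,47); (15,49); (14,20); (31,38); (6,22); (15,44); (7,38); (32,33); (4,33); (30,47); (8,38); (17,27); (16,43); (10,38); (38,0); (12,37); (9,38); (11,20); (7,36); (16,39); (5,22); (24,32); (4,24); (31,36); (30,50); (10,36); (36,0); (13,49); (9,36); (23,46); (8,36); (13,44); (2,21); (32,50); (4,50); (21,25); (24,30); (18,27); (20,26); (23,42); (22,35); (43,51); (6,36); (17,29); (11,37); (2,45); (5,38); (13,28); (19,22); (1,18); (13,37); (22,32); (4,22); (11,28); (5,24); (7,47); (6,33); (18,34); (25,29); (8,47); (30,38); (9,47); (19,50); (47,0); (10,47); (11,49); (5,50); (17,45); (8,33); (2,29); (1,48); (10,33); (33,0); (31,33); (19,24); (13,20); (42,43); (32,38); (4,38); (6,47); (7,33); (15,20); (6,50); (39,42); (33,35); (10,24); (24,0); (17,34); (9,24); (32,36); (4,36); (24,31); (19,33); (3,43); (7,24); (1,17); (18,21); (10,50); (50,0); (19,47); (9,50); (2,27); (6,24); (16,23); (5,33); (39,46); (7,50); (21,48); (15,37); (18,45); (29,40); (31,50); (30,36); (10,23); (23,0); (15,27); (3,22);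 (36,46); (8,23); (16,50); (1,14); (17,49); (7,23); (11,45); (20,25); (17,44); (2,37); (23,31); (14,34); (25,37); (6,23); (16,24); (1,12); (32,39); (4,39); (2,20); (4,41); (13,29); (11,21); (47,51); (12,34); (17,28); (3,38); (36,42); (26,45); (16,33); (5,23); (15,29); (1,26); (37,40); (50,51); (18,49); (28,48); (14,21); (3,36); (38,42); (26,34); (4,43); (32,43); (22,46); (12,45); (38,46); (24,51); (18,28); (48,49); (22,42); (23,35); (1,11); (44,48); (13,27); (16,47); (30,43); (14,45); (12,21); (19,23); (11,34); (20,40); (23,32); (4,23); (11,27); (20,48); (13,34); (6,39); (42,50); (6,41); (24,46); (38,51); (15,45); (40,44); (1,13); (18,37); (3,47); (40,49); (19,43); (8,39); (24,42); (8,41); (10,39); (39,0); (10,41); (41,0); (31,41); (15,21); (31,39); (28,40); (46,50); (7,39); (16,36); (7,41); (33,42); (35,39); (2,44); (13,21); (7,43); (3,24); (2,49); (12,27); (8,43); (19,39); (16,38); (19,41); (43,0); (10,43); (9,43); (25,28); (13,45); (3,50); (2,28); (14,27); (16,22); (5,39); (1,15); (5,41); (17,20); (42,47); (33,46); (25,49); (6,43); (36,51); (15,34); (25,44)]%N.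

Definition wit_ok (n : nat) : bool :=
  let: (j, k) := nth (0, 0)%N wit n in
  if k == 0%N then (1 <= j <= 51)%N && (code j == n)
  else [&& (1 <= j <= 51)%N, (1 <= k <= 51)%N, distinct_blocks P_KR j k
         & bitsum_ok (code j) (code k) n].

Lemma wit_all : all wit_ok (iota 1 1023).
Proof. Time vm_compute. reflexivity. Time Qed.

Lemma in_image (v : 'cV['F_2]_10) : exists2 n, (n < 1024)%N & v = hexcol n.
Proof.
have U : uniq (map hexcol (iota 0 1024)).
  rewrite map_inj_in_uniq ?iota_uniq // => a b; rewrite !mem_iota.
  by move=> /andP[_ al] /andP[_ bl]; exact: hexcol_inj.
have C : #|map hexcol (iota 0 1024)| = #|[set: 'cV['F_2]_10]|.
  by rewrite (card_uniqP U) size_map size_iota cardsT card_mx card_Fp.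
have S : map hexcol (iota 0 1024) \subset [set: 'cV['F_2]_10].
  by apply/subsetP => x _; rewrite inE.
have /subset_cardP/(_ S)/(_ v) := C.
move=> E; have : v \in map hexcol (iota 0 1024) by rewrite E in_setT.
case/mapP => n; rewrite mem_iota => /andP[_ nl] ->.
by exists n.
Qed.

Lemma cover (v : 'cV['F_2]_10) : v != 0 ->
     (exists j, (1 <= j <= 51)%N /\ v = colj H_KR j) \/
     (exists j k, (1 <= j <= 51)%N /\ (1 <= k <= 51)%N /\ distinct_blocks P_KR j k
                  /\ v = colj H_KR j + colj H_KR k).
Proof.
have [n nl ->] := in_image v => nz.
have n0 : n != 0%N by apply: contraNneq nz => ->; rewrite hexcol0.
have := allP wit_all n; rewrite mem_iota /= lt0n n0 /= add1n ltnS -ltnS => /(_ nl).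
rewrite /wit_ok; case: (nth _ _ _) => j k; case: ifP => _.
  by case/andP=> jr /eqP <-; left; exists j; rewrite colj_code.
case/and4P=> jr kr d s; right; exists j, k; do 3 split => //.
by rewrite !colj_code // (hexcol_add _ _ _ s).
Qed.

Lemma F2_1 (x : 'F_2) : x != 0 -> x = 1.
Proof. case: x => [[|[|m]] H] nz. - by case/eqP: nz; apply/val_inj. - by apply/val_inj. - by []. Qed.

Definition supp (c : 'rV['F_2]_51) : {set 'I_51} := [set j | c ord0 j != 0].

Lemma mulH (c : 'rV['F_2]_51) : H_KR *m c^T = \sum_(j in supp c) hKR j.+1.
Proof.
apply/matrixP => i k; rewrite !mxE summxE [RHS]big_mkcond /=; apply: eq_bigr => j _.
rewrite !mxE (ord1 k) inE; case: eqP => [->|/eqP/F2_1 ->]; first by rewrite mulr0.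
by rewrite mulr1.
Qed.

Lemma code_ok : all (fun j => (0 < code j < 1024)%N) (iota 1 51) && uniq (map code (iota 1 51)).
Proof. by vm_compute. Qed.

Lemma hexcol_self b : hexcol b + hexcol b = 0.
Proof.
rewrite -hexcol0; apply: hexcol_add; apply/allP => i _.
by rewrite /bits addnn -muln2 modnMl div0n mod0n.
Qed.

Lemma code_range (j : 'I_51) : (0 < code j.+1 < 1024)%N.
Proof.
have /andP[/allP A _] := code_ok; apply: A.
by rewrite mem_iota /= ltnS ltn_ord.
Qed.

Lemma hK (j : 'I_51) : hKR j.+1 = hexcol (code j.+1).
Proof. exact: hKR_code. Qed.

Lemma min3 (c : 'rV['F_2]_51) : codeword H_KR c -> c != 0 -> (3 <= wt c)%N.
Proof.
rewrite /codeword mulH /wt -/(supp c) => /eqP E nz.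
rewrite leqNgt; apply/negP => lt3.
have : #|supp c| != 0%N.
  apply: contra nz => /eqP/cards0_eq S0; apply/eqP/matrixP => i j.
  rewrite (ord1 i) !mxE; apply/eqP; apply: contraT => nzj.
  have jin : j \in supp c by rewrite inE.
  by rewrite S0 inE in jin.
move=> nz0; have : (#|supp c| == 1%N) || (#|supp c| == 2%N).
  by move: lt3 nz0; case: #|supp c| => [|[|[|]]].
case/orP => e.
- move: e E => /cards1P[a ->]; rewrite big_set1 hK => E.
  rewrite -hexcol0 in E; case/andP: (code_range a) => c0 c1.
  by move: c0; rewrite (hexcol_inj _ 0 c1 isT E).
- move: e E => /cards2P[a [b [ab ->]]].
  rewrite big_setU1 ?inE //= big_set1 !hK => E.
  have E' : hexcol (code a.+1) = hexcol (code b.+1).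
    by rewrite -[LHS]addr0 -(hexcol_self (code b.+1)) addrA E add0r.
  case/andP: (code_range a) => _ ca; case/andP: (code_range b) => _ cb.
  have ecode := hexcol_inj _ _ ca cb E'.
  case/andP: code_ok => _ /uniq_map_inj U.
  have ia : a.+1 \in iota 1 51 by rewrite mem_iota /= ltnS ltn_ord.
  have ib : b.+1 \in iota 1 51 by rewrite mem_iota /= ltnS ltn_ord.
  case: (U _ _ ia ib ecode) => eab.
  by move/eqP: ab; apply; apply/val_inj.
Qed.

Lemma sum3 : colj H_KR 5 + colj H_KR 27 + colj H_KR 29 = 0.
Proof.
rewrite !colj_code // (hexcol_add (code 5) (code 27) 596); last by vm_compute.
have -> : code 29 = 596%N by vm_compute.
exact: hexcol_self.
Qed.

Definition S3 : {set 'I_51} :=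
  (Ordinal (isT : (4 < 51)%N)) |: ((Ordinal (isT : (26 < 51)%N)) |: [set (Ordinal (isT : (28 < 51)%N))]).

Definition c3 : 'rV['F_2]_51 := \row_j (j \in S3)%:R.

Lemma supp_c3 : supp c3 = S3.
Proof.
apply/setP => j; rewrite [in LHS]inE mxE; case: (j \in S3); by rewrite ?oner_eq0 ?eqxx.
Qed.

Lemma exist3 : exists c, codeword H_KR c /\ c != 0 /\ wt c = 3%N.
Proof.
exists c3; split; last split.
- rewrite /codeword mulH supp_c3 /S3 !big_setU1 ?big_set1 ?inE //=.
  by rewrite !hKR_code // addrA; have := sum3; rewrite !colj_code // => ->.
- apply/eqP => /matrixP/(_ ord0 (Ordinal (isT : (4 < 51)%N))).
  rewrite !mxE !inE eqxx /= => /eqP; by rewrite oner_eq0.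
- by rewrite /wt -/(supp c3) supp_c3 /S3 !cardsU1 cards1 !inE.
Qed.

Theorem theorem5p2 :
  two_partition H_KR P_KR /\
  (forall v : 'cV['F_2]_10, v != 0 ->
     (exists j, (1 <= j <= 51)%N /\ v = colj H_KR j) \/
     (exists j k, (1 <= j <= 51)%N /\ (1 <= k <= 51)%N /\ distinct_blocks P_KR j k
                  /\ v = colj H_KR j + colj H_KR k)) /\
  min_distance H_KR 3 /\
  colj H_KR 5 + colj H_KR 27 + colj H_KR 29 = 0 /\
  distinct_blocks P_KR 5 27 /\ distinct_blocks P_KR 5 29 /\ distinct_blocks P_KR 27 29.
Proof.
split; last split; last split; last split.
- split; first by split; vm_compute.
  move=> v; case: (eqVneq v 0) => [->|nz]; first by left.
  by right; apply: cover.
- exact: cover.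
- split; [exact: exist3 | exact: min3].
- exact: sum3.
- by vm_compute.
Qed.
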